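(* Let $f\in\mathbb B(X)$ be monotone and $x\in X$. Then $$\mathbf{Bz}_x(\omega_f)=\mathbf{Bz}_x(\nu_f)=\mathbf I_x(f).$$
   Context: $X$ is a fixed finite set of $n=|X|$ variables; $\mathbb B(X)$ is the set of Boolean functions $\{0,1\}^X\to\{0,1\}$; $f_{x/c}$ is $f$ with $x$ fixed to $c$; $f$ is monotone if $f_{x/1}\ge f_{x/0}$ pointwise for every $x$. For assignments $\mathbf u$ over $S$ and $\mathbf w$ over $X\setminus S$, $\mathbf u;\mathbf w$ is their concatenation. Influence: $\mathbf I_x(f)=\mathbb E[f_{x/1}\oplus f_{x/0}]$ (uniform distribution on $\{0,1\}^X$). For a cooperative game $v:2^X\to\mathbb R$, $\partial_xv(S)=v(S\cup\{x\})-v(S\setminus\{x\})$ and the Banzhaf value is $\mathbf{Bz}_x(v)=2^{-(n-1)}\sum_{S\subseteq X\setminus\{x\}}\partial_xv(S)$. Dominating CGM: $\omega_f(S)=1$ if $\exists\mathbf u\in\{0,1\}^S\ \forall\mathbf w\in\{0,1\}^{X\setminus S}: f(\mathbf u;\mathbf w)=1$, else $0$. Rectifying CGM: $\nu_f(S)=1$ if $\forall\mathbf w\in\{0,1\}^{X\setminus S}\ \exists\mathbf u\in\{0,1\}^S: f(\mathbf u;\mathbf w)=1$, else $0$. *)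

(* Defs.v *)
From mathcomp Require Import all_boot all_order all_algebra.
Set Implicit Arguments. Unset Strict Implicit. Unset Printing Implicit Defensive.
Import GRing.Theory Num.Theory.
Local Open Scope ring_scope.

Definition assignment (X : finType) := {ffun X -> bool}.
Definition boolfun (X : finType) := assignment X -> bool.

Definition setvar (X : finType) (a : assignment X) (x : X) (c : bool) : assignment X :=
  [ffun y => if y == x then c else a y].
Definition restrict (X : finType) (f : boolfun X) (x : X) (c : bool) : boolfun X :=
  fun a => f (setvar a x c).

Definition monotone (X : finType) (f : boolfun X) : Prop :=
  forall (x : X) (a : assignment X), (restrict f x false a <= restrict f x true a)%N.

Definition concat (X : finType) (S : {set X}) (u w : assignment X) : assignment X :=
  [ffun y => if y \in S then u y else w y].

Definition influence (X : finType) (f : boolfun X) (x : X) : rat :=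
  (2%:R ^+ #|X|)^-1 *
  \sum_(a : assignment X) ((restrict f x true a (+) restrict f x false a : bool)%:R).

Definition game (X : finType) := {set X} -> rat.
Definition deriv (X : finType) (v : game X) (x : X) (S : {set X}) : rat :=
  v (x |: S) - v (S :\ x).
Definition banzhaf (X : finType) (v : game X) (x : X) : rat :=
  (2%:R ^+ (#|X| - 1))^-1 * \sum_(S : {set X} | S \subset [set~ x]) deriv v x S.

Definition omega (X : finType) (f : boolfun X) : game X := fun S =>
  ([exists u : assignment X, forall w : assignment X, f (concat S u w)] : bool)%:R.
Definition nu (X : finType) (f : boolfun X) : game X := fun S =>
  ([forall w : assignment X, exists u : assignment X, f (concat S u w)] : bool)%:R.

(* Main.v *)
Require Import Defs.
From mathcomp Require Import all_boot all_order all_algebra.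
Local Open Scope ring_scope.
From mathcomp Require Import ring.
Import GRing.Theory.
Set Implicit Arguments. Unset Strict Implicit.

Lemma mono_le (X : finType) (f : boolfun X) : monotone f ->
  forall a b : assignment X, (forall y, a y <= b y)%N -> (f a <= f b)%N.
Proof.
move=> Hm.
suff H : forall k (a b : assignment X), #|[set y | a y != b y]| = k ->
  (forall y, a y <= b y)%N -> (f a <= f b)%N by move=> a b; apply: H.
elim=> [|k IH] a b Hk Hab.
  have -> : a = b; last by [].
  apply/ffunP=> y; move/eqP: Hk; rewrite cards_eq0 => /eqP /setP /(_ y).
  by rewrite inE in_set0 => /negbFE /eqP.
have : [set y | a y != b y] != set0 by rewrite -card_gt0 Hk.
case/set0Pn=> y; rewrite inE => Hy.
have [ay hby] : a y = false /\ b y = true.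
  by move: (Hab y) Hy; case: (a y); case: (b y).
have Hm1 := Hm y a; rewrite /restrict in Hm1.
have Ea : setvar a y false = a.
  by apply/ffunP=> z; rewrite ffunE; case: eqP => // ->.
rewrite Ea in Hm1.
apply: (leq_trans Hm1); apply: IH.
  have -> : [set z | setvar a y true z != b z] = [set z | a z != b z] :\ y.
    apply/setP=> z; rewrite !inE ffunE; case: (z =P y) => [->|] //=.
    by rewrite hby.
  by move: Hk; rewrite (cardsD1 y) inE Hy => [[]].
move=> z; rewrite ffunE; case: eqP => [->|_]; first by rewrite hby.
exact: Hab.
Qed.

Lemma mono_imp (X : finType) (f : boolfun X) : monotone f ->
  forall a b : assignment X, (forall y, a y <= b y)%N -> f a -> f b.
Proof.
move=> Hm a b Hab Ha; have := mono_le Hm Hab; rewrite Ha.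
by case: (f b).
Qed.

Definition ind (X : finType) (S : {set X}) : assignment X := [ffun y => y \in S].

Lemma omega_ind (X : finType) (f : boolfun X) S : monotone f ->
  omega f S = (f (ind S))%:R.
Proof.
move=> Hm; rewrite /omega; congr (_%:R); congr (nat_of_bool _).
apply/idP/idP.
  case/existsP=> u /forallP /(_ [ffun _ => false]) H.
  apply: (mono_imp Hm _ H).
  by move=> y; rewrite !ffunE; case: (y \in S) => //; case: (u y).
move=> H; apply/existsP; exists [ffun _ => true]; apply/forallP=> w.
apply: (mono_imp Hm _ H).
by move=> y; rewrite !ffunE; case: (y \in S).
Qed.

Lemma nu_ind (X : finType) (f : boolfun X) S : monotone f ->
  nu f S = (f (ind S))%:R.
Proof.
move=> Hm; rewrite /nu; congr (_%:R); congr (nat_of_bool _).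
apply/idP/idP.
  move/forallP/(_ [ffun _ => false])/existsP=> [u H].
  apply: (mono_imp Hm _ H).
  by move=> y; rewrite !ffunE; case: (y \in S) => //; case: (u y).
move=> H; apply/forallP=> w; apply/existsP; exists [ffun _ => true].
apply: (mono_imp Hm _ H).
by move=> y; rewrite !ffunE; case: (y \in S).
Qed.

Definition Hx (X : finType) (f : boolfun X) x (S : {set X}) : rat :=
  (restrict f x true (ind S))%:R - (restrict f x false (ind S))%:R.

Lemma deriv_ind (X : finType) (f : boolfun X) x (g : game X) S :
  (forall T, g T = (f (ind T))%:R) -> Defs.deriv g x S = Hx f x S.
Proof.
move=> Hg; rewrite /Defs.deriv !Hg /Hx /restrict; congr (_%:R - _%:R); congr f;
  apply/ffunP=> y; rewrite !ffunE; case: eqP => [->|/eqP ne];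
  rewrite ?inE ?eqxx ?(negbTE ne) //.
Qed.

Lemma Hx_U (X : finType) (f : boolfun X) x S : Hx f x (x |: S) = Hx f x S.
Proof.
rewrite /Hx /restrict; congr (_%:R - _%:R); congr f;
  apply/ffunP=> y; rewrite !ffunE; case: (y =P x) => [_|/eqP ne] //;
  rewrite ?ffunE ?inE (negbTE ne).
by []. by []. Qed.

Lemma banz (X : finType) (f : boolfun X) x (g : game X) : monotone f ->
  (forall T, g T = (f (ind T))%:R) -> banzhaf g x = influence f x.
Proof.
move=> Hm Hg; rewrite /banzhaf /influence.
under eq_bigr => S _ do rewrite (deriv_ind x S Hg).
have Hxor : forall a, ((restrict f x true a (+) restrict f x false a : bool)%:R : rat)
   = (restrict f x true a)%:R - (restrict f x false a)%:R.
  move=> a; have := Hm x a; rewrite /restrict.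
  by case: (f (setvar a x true)); case: (f (setvar a x false)) => //= _;
    rewrite ?subr0 ?subrr.
under [X in _ = _ * X]eq_bigr => a _ do rewrite Hxor.
rewrite (reindex (@ind X)) /=; last first.
  exists (fun a : assignment X => [set y | a y]) => [S _|a _].
    by apply/setP=> y; rewrite inE ffunE.
  by apply/ffunP=> y; rewrite ffunE inE.
rewrite (_ : \sum_(j : {set X}) _ = \sum_(S : {set X}) Hx f x S) //.
rewrite [X in _ = _ * X](bigID (fun S : {set X} => x \in S)) /=.
have E1 : \sum_(S : {set X} | x \in S) Hx f x S =
          \sum_(S : {set X} | x \notin S) Hx f x S.
  rewrite (reindex_onto (fun S => x |: S) (fun S => S :\ x)) /=; last first.
    by move=> S HS; rewrite setD1K.
  apply: eq_big => [S|S _]; last by rewrite Hx_U.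
  rewrite setU11 /=; apply/eqP/idP => [<-|HS]; first by rewrite setD11.
  by rewrite setU1K.
have E2 : \sum_(S : {set X} | S \subset [set~ x]) Hx f x S =
          \sum_(S : {set X} | x \notin S) Hx f x S.
  by apply: eq_bigl => S; rewrite subsetC sub1set inE.
rewrite E1 E2.
have H0 : (0 < #|X|)%N by apply/card_gt0P; exists x.
have Hn : #|X| = (#|X| - 1).+1 by rewrite subn1 prednK.
rewrite [in RHS]Hn exprS.
set s := \sum_(S | _) _.
have H2 : (2%:R ^+ (#|X| - 1) : rat) != 0 by rewrite expf_neq0.
field; rewrite H2 /=; done.
Qed.

Theorem mainTheorem15 (X : finType) (f : boolfun X) (x : X) :
  monotone f ->
  banzhaf (omega f) x = influence f x /\ banzhaf (nu f) x = influence f x.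
Proof.
move=> Hm; split; apply: banz => // T; [exact: omega_ind | exact: nu_ind].
Qed.
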